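(* Let $C$ be a normal, closed cone with nonempty interior in a real Banach space. If $f:\operatorname{int} C\to\operatorname{int} C$ is $\tau$-condensing and $g:\operatorname{int} C\to\operatorname{int} C$ is $d_T$-nonexpansive, then $f+g$ is $\tau$-condensing.
   Context: A closed cone $C$ (closed convex, $\lambda C\subseteq C$ for $\lambda\ge0$, $C\cap(-C)=\{0\}$) induces the order $x\le y$ iff $y-x\in C$. $C$ is normal if there is $\kappa$ with $\|x\|\le\kappa\|y\|$ whenever $0\le x\le y$. Thompson's metric on $\operatorname{int}C$: $d_T(x,y)=\log\inf\{\beta\ge1:\beta^{-1}x\le y\le\beta x\}$; $g$ is $d_T$-nonexpansive if $d_T(g(x),g(y))\le d_T(x,y)$. For a $d_T$-bounded set $A\subseteq\operatorname{int}C$, $\tau(A)=\inf\{d>0: A$ has a finite cover by sets of $d_T$-diameter $\le d\}$. A continuous map $f:D\to\operatorname{int}C$ ($D\subseteq\operatorname{int}C$) is $\tau$-condensing if $\tau(f(A))<\tau(A)$ for every $d_T$-bounded $A\subseteq D$ with $\tau(A)>0$. *)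

(* Defs.v *)
From HB Require Import structures.
From mathcomp Require Import all_boot all_order all_algebra.
From mathcomp Require Import all_classical all_reals all_analysis.
Set Implicit Arguments. Unset Strict Implicit. Unset Printing Implicit Defensive.
Import Order.TTheory GRing.Theory Num.Theory.
Import numFieldNormedType.Exports.
Local Open Scope classical_set_scope.
Local Open Scope ring_scope.

Section Cone.
Context {R : realType} {V : completeNormedModType R}.

Definition is_closed_cone (C : set V) : Prop :=
  [/\ closed C,
      (forall x y (t : R), C x -> C y -> 0 <= t -> t <= 1 ->
         C (t *: x + (1 - t) *: y)),
      (forall (l : R) x, 0 <= l -> C x -> C (l *: x)) &
      (forall x, C x -> C (- x) -> x = 0)].

Definition cle (C : set V) (x y : V) : Prop := C (y - x).

Definition normal_cone (C : set V) : Prop :=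
  exists kappa : R, forall x y : V,
    cle C 0 x -> cle C x y -> `|x| <= kappa * `|y|.

Definition dT (C : set V) (x y : V) : R :=
  ln (inf [set b : R | 1 <= b /\ cle C (b^-1 *: x) y /\ cle C y (b *: x)]).

Definition dT_bounded (C : set V) (A : set V) : Prop :=
  A `<=` interior C /\ exists M : R, forall x y, A x -> A y -> dT C x y <= M.

Definition finite_cover_diam (C : set V) (A : set V) (d : R) : Prop :=
  exists s : seq (set V),
    A `<=` (fun x => exists2 S, S \in s & S x) /\
    (forall S, S \in s ->
       S `<=` interior C /\ forall x y, S x -> S y -> dT C x y <= d).

(* Kuratowski-type measure of noncompactness w.r.t. d_T (extended real;
   it is finite on d_T-bounded sets, +oo if no such cover exists) *)
Definition tau (C : set V) (A : set V) : \bar R :=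
  ereal_inf [set (d%:E) | d in [set d : R | 0 < d /\ finite_cover_diam C A d]].

Definition tau_condensing (C : set V) (D : set V) (f : V -> V) : Prop :=
  [/\ (forall x, D x -> interior C (f x)),
      {within D, continuous f} &
      (forall A, A `<=` D -> dT_bounded C A -> (0 < tau C A)%E ->
         (tau C (f @` A) < tau C A)%E)].

Definition dT_nonexpansive (C : set V) (g : V -> V) : Prop :=
  (forall x, interior C x -> interior C (g x)) /\
  forall x y, interior C x -> interior C y -> dT C (g x) (g y) <= dT C x y.

End Cone.

(* Main.v *)
Require Import Defs.
From HB Require Import structures.
From mathcomp Require Import all_boot all_order all_algebra.
From mathcomp Require Import all_classical all_reals all_analysis.
From mathcomp Require Import ring lra.
Import Order.TTheory GRing.Theory Num.Theory.
Import numFieldNormedType.Exports.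
Local Open Scope classical_set_scope.
Local Open Scope ring_scope.

Section Cone.
Variables (R : realType) (V : completeNormedModType R) (C : set V).
Hypothesis hC : is_closed_cone C.
Hypothesis hne : exists x, interior C x.

Lemma C0 : C 0.
Proof.
case: hne => x /interior_subset Cx; case: hC => _ _ hZ _.
by have := hZ 0 x (lexx _) Cx; rewrite scale0r.
Qed.

Lemma CZ l x : 0 <= l -> C x -> C (l *: x).
Proof. by case: hC => _ _ hZ _; apply: hZ. Qed.

Lemma CD x y : C x -> C y -> C (x + y).
Proof.
case: hC => _ hcv _ _ Cx Cy.
have h := hcv x y (2^-1) Cx Cy.
have : C (2 *: ((2^-1) *: x + (1 - 2^-1) *: y)).
  by apply: CZ => //; apply: h; lra.
have -> : (1 - 2^-1 : R) = 2^-1 by field.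
by rewrite scalerDr !scalerA divff ?pnatr_eq0 // !scale1r.
Qed.

Lemma int_ball x : interior C x -> exists2 r : R, 0 < r & forall z, `|z| < r -> C (x + z).
Proof.
move=> /nbhs_ballP [r r0 hr]; exists r => // z hz; apply: hr.
by rewrite -ball_normE /ball_ /= opprD addrA subrr add0r normrN.
Qed.

Lemma int_add x y : interior C x -> C y -> interior C (x + y).
Proof.
move=> /int_ball [r r0 hr] Cy; apply/nbhs_ballP; exists r => // w.
rewrite -ball_normE /ball_ /= => hw.
have -> : w = (x + (w - y - x)) + y by rewrite [x + _]addrC !addrNK.
apply: CD => //; apply: hr.
by rewrite -normrN opprB opprB addrA.
Qed.

Lemma int_sub x y : interior C x -> exists2 d : R, 0 < d & forall t, 0 <= t -> t <= d -> C (x - t *: y).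
Proof.
move=> /int_ball [r r0 hr]; exists (r / (`|y| + 1)).
  by apply: divr_gt0 => //; apply: ltr_pwDr.
move=> t t0 td; apply: hr; rewrite normrN normrZ ger0_norm //.
have y1 : 0 < `|y| + 1 by apply: ltr_pwDr.
apply: (le_lt_trans (y := r / (`|y| + 1) * `|y|)).
  by apply: ler_wpM2r.
have -> : r / (`|y| + 1) * `|y| = r - r / (`|y| + 1) by field; rewrite lt0r_neq0.
have : 0 < r / (`|y| + 1) by apply: divr_gt0.
lra.
Qed.


Definition Rel (b : R) (x y : V) : Prop :=
  1 <= b /\ cle C (b^-1 *: x) y /\ cle C y (b *: x).

Lemma Rel_up b b' x y : C x -> Rel b x y -> b <= b' -> Rel b' x y.
Proof.
move=> Cx [b1 [h1 h2]] bb'; split; first lra.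
have b0 : 0 < b by lra.
have b'0 : 0 < b' by lra.
split; rewrite /cle.
- have -> : y - b'^-1 *: x = (y - b^-1 *: x) + (b^-1 - b'^-1) *: x.
    by rewrite scalerBl addrA addrNK.
  apply: CD => //; apply: CZ => //.
  by rewrite subr_ge0 lef_pV2 ?posrE.
- have -> : b' *: x - y = (b *: x - y) + (b' - b) *: x.
    by rewrite scalerBl [RHS]addrC addrA addrNK.
  apply: CD => //; apply: CZ => //; lra.
Qed.

Lemma Rel_trans a b x y z : Rel a x y -> Rel b y z -> Rel (a * b) x z.
Proof.
move=> [a1 [h1 h2]] [b1 [h3 h4]]; split; first nra.
have a0 : a != 0 by apply: lt0r_neq0; lra.
have b0 : 0 <= b by lra.
split; rewrite /cle.
- have -> : z - (a*b)^-1 *: x = (z - b^-1 *: y) + b^-1 *: (y - a^-1 *: x).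
    by rewrite scalerBr scalerA addrA addrNK invfM mulrC.
  by apply: CD => //; apply: CZ => //; rewrite invr_ge0.
- have -> : (a * b) *: x - z = (b *: y - z) + b *: (a *: x - y).
    by rewrite scalerBr scalerA [RHS]addrC addrA addrNK mulrC.
  by apply: CD => //; apply: CZ.
Qed.

Lemma Rel_sym a x y : Rel a x y -> Rel a y x.
Proof.
move=> [a1 [h1 h2]]; split => //.
have a0 : a != 0 by apply: lt0r_neq0; lra.
split; rewrite /cle.
- have -> : x - a^-1 *: y = a^-1 *: (a *: x - y).
    by rewrite scalerBr scalerA mulVf // scale1r.
  by apply: CZ => //; rewrite invr_ge0; lra.
- have -> : a *: y - x = a *: (y - a^-1 *: x).
    by rewrite scalerBr scalerA divff // scale1r.
  by apply: CZ => //; lra.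
Qed.

Lemma Rel_refl x : Rel 1 x x.
Proof. by split => //; rewrite /cle invr1 scale1r subrr; split; apply: C0. Qed.

Lemma Rel_ex x y : interior C x -> interior C y -> exists b, Rel b x y.
Proof.
move=> ix iy.
have [d1 d10 hd1] := @int_sub y x iy.
have [d2 d20 hd2] := @int_sub x y ix.
pose b := 1 + d1^-1 + d2^-1.
have i1 : 0 < d1^-1 by rewrite invr_gt0.
have i2 : 0 < d2^-1 by rewrite invr_gt0.
have b1 : 1 <= b by rewrite /b; lra.
have b0 : 0 < b by lra.
have bi0 : 0 <= b^-1 by rewrite invr_ge0; lra.
exists b; split => //; split; rewrite /cle.
- apply: hd1 => //; rewrite -[d1]invrK lef_pV2 ?posrE //; rewrite /b; lra.
- have -> : b *: x - y = b *: (x - b^-1 *: y).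
    by rewrite scalerBr scalerA divff ?scale1r // lt0r_neq0.
  apply: CZ; first lra.
  apply: hd2 => //; rewrite -[d2]invrK lef_pV2 ?posrE //; rewrite /b; lra.
Qed.

Lemma dT_le x y d : (forall b, expR d < b -> Rel b x y) -> dT C x y <= d.
Proof.
move=> H.
change (ln (inf (fun b => Rel b x y)) <= d).
set S := (fun b => Rel b x y).
have e0 := expR_gt0 d.
have Sne : S !=set0 by exists (expR d + 1); apply: H; lra.
have lbS : lbound S 1 by move=> b [].
have i1 : 1 <= inf S by apply: lb_le_inf.
have hl : has_lbound S by exists 1.
have hi : inf S <= expR d.
  rewrite leNgt; apply/negP => h.
  have Sm : S ((expR d + inf S) / 2) by apply: H; lra.
  have := ge_inf hl Sm; lra.
by rewrite -[d in _ <= d]expRK ler_ln ?posrE //; lra.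
Qed.

Lemma Rel_dT x y d b : interior C x -> interior C y -> dT C x y <= d -> expR d < b -> Rel b x y.
Proof.
move=> ix iy.
move=> hd0 hb; have hd : ln (inf (fun b => Rel b x y)) <= d := hd0.
set S := (fun b => Rel b x y) in hd.
have Sne : S !=set0 by have [b0 hb0] := @Rel_ex x y ix iy; exists b0.
have lbS : lbound S 1 by move=> b' [].
have i1 : 1 <= inf S by apply: lb_le_inf.
have : expR (ln (inf S)) <= expR d by rewrite ler_expR.
rewrite lnK ?posrE; last lra.
move=> h; have [b0 Sb0 lt0] := inf_lt Sne (le_lt_trans h hb).
by apply: (@Rel_up b0 b x y (interior_subset ix) Sb0); lra.
Qed.


Lemma le_add u w u' w' : C (w - u) -> C (w' - u') -> C ((w + w') - (u + u')).
Proof. by move=> h1 h2; rewrite opprD addrACA; apply: CD. Qed.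

Lemma le_trans' u w z : C (w - u) -> C (z - w) -> C (z - u).
Proof. by move=> h1 h2; rewrite -[z](addrNK w) -addrA; apply: CD. Qed.

Lemma le_comb K u v (al p : R) : C u -> C (K *: u - v) -> 0 <= al -> 0 <= p ->
  C ((al + p * K) *: u - p *: v).
Proof.
move=> Cu Ck al0 p0.
have -> : (al + p * K) *: u - p *: v = al *: u + p *: (K *: u - v).
  by rewrite scalerDl scalerBr scalerA addrA.
by apply: CD; apply: CZ.
Qed.

Lemma scal1 (a b K : R) : 1 <= a -> a <= b -> 0 <= K ->
  [/\ 1 <= (a + b*K)/(1+K), a <= (a + b*K)/(1+K), (a + b*K)/(1+K) <= b &
   0 <= a^-1 - ((a + b*K)/(1+K))^-1 - (((a + b*K)/(1+K))^-1 - b^-1)*K].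
Proof.
move=> a1 ab K0.
have K1 : 0 < 1 + K by lra.
have hac : a <= (a + b*K)/(1+K) by rewrite ler_pdivlMr //; nra.
have hcb : (a + b*K)/(1+K) <= b by rewrite ler_pdivrMr //; nra.
split => //; first lra.
have a0 : a != 0 by apply: lt0r_neq0; lra.
have b0 : b != 0 by apply: lt0r_neq0; lra.
have s0 : a + b * K != 0 by apply: lt0r_neq0; nra.
have K10 : 1 + K != 0 by apply: lt0r_neq0.
have -> : a^-1 - ((a + b*K)/(1+K))^-1 - (((a + b*K)/(1+K))^-1 - b^-1)*K
   = K * (a - b)^+2 / (a * b * (a + b * K)).
  by field; rewrite ?a0 ?b0 ?s0 ?K10.
apply: divr_ge0; first by apply: mulr_ge0 => //; apply: sqr_ge0.
apply: mulr_ge0; nra.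
Qed.

Lemma Rel_sum a b K u v u' v' : C u -> C v -> 0 <= K -> C (K *: u - v) ->
  a <= b -> Rel a u u' -> Rel b v v' -> Rel ((a + b*K)/(1+K)) (u + v) (u' + v').
Proof.
move=> Cu Cv K0 Ck ab [a1 [h1 h2]] [b1 [h3 h4]].
have [c1 ac cb hal] := @scal1 a b K a1 ab K0.
set c := (a + b*K)/(1+K) in c1 ac cb hal *.
have K1 : 0 < 1 + K by lra.
have hc : c - a = (b - c) * K.
  by rewrite /c; field; apply: lt0r_neq0.
split => //; split; rewrite /cle.
- apply: (@le_trans' _ (a^-1 *: u + b^-1 *: v)); last exact: le_add.
  have -> : a^-1 *: u + b^-1 *: v - c^-1 *: (u + v)
      = (a^-1 - c^-1) *: u - (c^-1 - b^-1) *: v.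
    by rewrite scalerDr !scalerBl opprD opprB addrACA.
  have -> : a^-1 - c^-1 = (a^-1 - c^-1 - (c^-1 - b^-1) * K) + (c^-1 - b^-1) * K.
    by rewrite addrNK.
  apply: le_comb => //.
  by rewrite subr_ge0 lef_pV2 ?posrE //; lra.
- apply: (@le_trans' _ (a *: u + b *: v)); first exact: le_add.
  have -> : c *: (u + v) - (a *: u + b *: v) = (c - a) *: u - (b - c) *: v.
    by rewrite scalerDr !scalerBl opprD opprB addrACA.
  rewrite hc -[(b - c) * K]add0r.
  apply: le_comb => //; lra.
Qed.


Lemma int_ball2 x : interior C x ->
  exists2 r : R, 0 < r & forall z, `|z| < r -> interior C (x + z).
Proof.
move=> /int_ball [r r0 hr]; exists (r / 2); first by apply: divr_gt0.
move=> z hz; apply/nbhs_ballP; exists (r / 2); first by apply: divr_gt0.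
move=> w; rewrite -ball_normE /ball_ /= => hw.
have -> : w = x + (w - x) by rewrite addrC addrNK.
apply: hr.
have -> : w - x = (w - (x + z)) + z by rewrite opprD addrA addrNK.
apply: (le_lt_trans (ler_normD _ _)).
by rewrite -normrN opprB; lra.
Qed.

Lemma Rel_close x r s y : 0 < s -> s <= 1/2 -> (forall z, `|z| < r -> C (x + z)) ->
  `|x - y| < s * r -> C x -> Rel (1 + 2 * s) x y.
Proof.
move=> s0 s2 hr hxy Cx.
have s0' : s != 0 by apply: lt0r_neq0.
have hz : `|s^-1 *: (y - x)| < r.
  rewrite normrZ ger0_norm ?invr_ge0 ?ltW // -normrN opprB.
  by rewrite mulrC ltr_pdivrMr // mulrC.
have hz' : `|- (s^-1 *: (y - x))| < r by rewrite normrN.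
have C1 : C (y - (1 - s) *: x).
  have -> : y - (1 - s) *: x = s *: (x + s^-1 *: (y - x)).
    rewrite scalerDr scalerA divff // scale1r scalerBl scale1r.
    by rewrite opprB addrCA.
  by apply: CZ; [lra | apply: hr].
have C2 : C ((1 + s) *: x - y).
  have -> : (1 + s) *: x - y = s *: (x + - (s^-1 *: (y - x))).
    rewrite scalerDr scalerN scalerA divff // scale1r scalerDl scale1r.
    by rewrite opprB addrCA addrA.
  by apply: CZ; [lra | apply: hr].
have b0 : 0 < 1 + 2 * s by lra.
split; first lra.
split; rewrite /cle.
- have -> : y - (1 + 2 * s)^-1 *: x = (y - (1 - s) *: x) + ((1 - s) - (1 + 2 * s)^-1) *: x.
    by rewrite [(1 - s - _) *: x]scalerBl addrA addrNK.
  apply: CD => //; apply: CZ => //.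
  rewrite subr_ge0 -(ler_pM2r b0) mulVf ?lt0r_neq0 //; nra.
- have -> : (1 + 2 * s) *: x - y = ((1 + s) *: x - y) + s *: x.
    by rewrite addrAC -scalerDl; congr (_ *: _ - _); lra.
  by apply: CD => //; apply: CZ => //; lra.
Qed.


Lemma g_cont g : normal_cone C -> dT_nonexpansive C g -> {within interior C, continuous g}.
Proof.
move=> [k hk] [gi gne].
apply: continuous_in_subspaceT => x; rewrite inE => ix.
apply/cvgrPdist_lt => eps eps0.
have [r r0 hr] := @int_ball2 x ix.
set N := `|g x|; set k' := `|k|.
have N0 : 0 <= N by apply: normr_ge0.
have k0 : 0 <= k' by apply: normr_ge0.
set D := 12 * (k' + 1) * (N + 1).
have D0 : 0 < D by rewrite /D; nra.
set s := eps / (D + 2 * eps).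
have s0 : 0 < s by apply: divr_gt0; lra.
have hsD : s * (D + 2 * eps) = eps by rewrite /s; field; apply: lt0r_neq0; lra.
have s2 : s <= 1/2 by nra.
have s3 : s * D <= eps by nra.
apply/nbhs_normP; exists (s * r); first by apply: mulr_gt0.
move=> y; rewrite /ball_ /= => hxy.
have sr : s * r <= r / 2 by nra.
have iy : interior C y.
  have -> : y = x + (y - x) by rewrite addrC addrNK.
  by apply: hr; rewrite -normrN opprB; lra.
have hR := @Rel_close x r s y s0 s2 (fun z hz => interior_subset (hr z hz)) hxy (interior_subset ix).
have b0 : 0 < 1 + 2 * s by lra.
have hd : dT C x y <= ln (1 + 2 * s).
  apply: (@dT_le x y) => b; rewrite lnK ?posrE // => hb.
  by apply: (@Rel_up _ b x y (interior_subset ix) hR); lra.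
have hg : dT C (g x) (g y) <= ln (1 + 2 * s) := le_trans (gne x y ix iy) hd.
have hR' : Rel (1 + 3 * s) (g x) (g y).
  by apply: (@Rel_dT (g x) (g y) _ _ (gi x ix) (gi y iy) hg); rewrite lnK ?posrE //; lra.
case: hR' => [b1 [l1 l2]].
set ib := (1 + 3 * s)^-1 in l1 l2 *.
have ib0 : 0 < ib by rewrite invr_gt0; lra.
have hib : ib * (1 + 3 * s) = 1 by rewrite mulVf // lt0r_neq0 //; lra.
have hw := hk (g y - ib *: g x) ((1 + 3 * s - ib) *: g x).
have hw' : `|g y - ib *: g x| <= k * `|(1 + 3 * s - ib) *: g x|.
  apply: hw; rewrite /cle ?subr0 //.
  by rewrite scalerBl opprB addrA addrNK.
have ib1 : ib <= 1 by nra.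
have e1 : 1 - ib <= 3 * s by nra.
have e2 : 1 + 3 * s - ib <= 6 * s by nra.
have -> : g x - g y = (1 - ib) *: g x - (g y - ib *: g x).
  by rewrite scalerBl scale1r opprB addrA addrNK.
apply: (le_lt_trans (ler_normB _ _)).
rewrite normrZ ger0_norm; last lra.
have hk' : k * `|(1 + 3 * s - ib) *: g x| <= k' * ((1 + 3 * s - ib) * N).
  rewrite normrZ ger0_norm; last lra.
  by apply: ler_wpM2r; [apply: mulr_ge0; [lra | apply: normr_ge0] | apply: ler_norm].
have : (1 - ib) * N + k' * ((1 + 3 * s - ib) * N) <= 3 * s * N + k' * (6 * s * N).
  apply: lerD; first by apply: ler_wpM2r.
  by apply: ler_wpM2l => //; apply: ler_wpM2r.
have : 3 * s * N + k' * (6 * s * N) < eps.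
  have hD : s * D = 12 * (s * (k' + 1) * (N + 1)) by rewrite /D; ring.
  have h1 : 0 <= s * k' by apply: mulr_ge0; lra.
  have h2 : 0 <= s * N by apply: mulr_ge0; lra.
  have h3 : 0 < s * (k' + 1) * (N + 1) by apply: mulr_gt0; [apply: mulr_gt0|]; lra.
  have h4 : 3 * s * N + k' * (6 * s * N) <= 6 * (s * (k' + 1) * (N + 1)).
    have -> : 6 * (s * (k' + 1) * (N + 1)) = 3 * s * N + k' * (6 * s * N) + (6 * (s * k') + 3 * (s * N) + 6 * s) by ring.
    lra.
  lra.
rewrite -/N; lra.
Qed.


Lemma cover_bound (d : R) (s : seq (set V)) z : interior C z ->
  (forall S, S \in s -> S `<=` interior C /\ forall x y, S x -> S y -> dT C x y <= d) ->
  exists B, 1 <= B /\ forall S, S \in s -> forall y, S y -> Rel B z y.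
Proof.
move=> iz; elim: s => [|S s IH] hs.
  by exists 1; split => // S; rewrite in_nil.
have [B [B1 hB]] : exists B, 1 <= B /\ forall S, S \in s -> forall y, S y -> Rel B z y.
  by apply: IH => S' hS'; apply: hs; rewrite in_cons hS' orbT.
have [hS1 hS2] : S `<=` interior C /\ forall x y, S x -> S y -> dT C x y <= d.
  by apply: hs; rewrite in_cons eqxx.
case: (pselect (exists p, S p)) => [[p Sp]|nS]; last first.
  exists B; split => // S'; rewrite in_cons => /orP [/eqP -> y Sy|]; last exact: hB.
  by exfalso; apply: nS; exists y.
have [be hbe] := @Rel_ex z p iz (hS1 p Sp).
have hb1 : 1 <= be by case: hbe.
have e0 := expR_gt0 d.
have hp : 0 <= be * (expR d + 1) by apply: mulr_ge0; lra.
exists (B + be * (expR d + 1)); split; first lra.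
move=> S'; rewrite in_cons => /orP [/eqP -> y Sy|hS' y Sy].
- have hpy : Rel (expR d + 1) p y.
    by apply: (@Rel_dT p y d) => //; [apply: hS1 | apply: hS1 | apply: hS2 | lra].
  have h := @Rel_trans be (expR d + 1) z p y hbe hpy.
  by apply: (@Rel_up _ _ z y (interior_subset iz) h); lra.
- by apply: (@Rel_up B _ z y (interior_subset iz) (hB S' hS' y Sy)); lra.
Qed.

Lemma tau_le A d : 0 < d -> finite_cover_diam C A d -> (tau C A <= d%:E)%E.
Proof. by move=> d0 h; apply: ereal_inf_lbound; exists d. Qed.

Lemma tau_lt A x : (tau C A < x%:E)%E ->
  exists d, [/\ 0 < d, finite_cover_diam C A d & d < x].
Proof.
move=> /ereal_inf_lt [y [d [d0 hd] <-]]; rewrite lte_fin => dx.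
by exists d.
Qed.


Lemma main_lemma (f g : V -> V) : normal_cone C -> tau_condensing C (interior C) f ->
  dT_nonexpansive C g -> tau_condensing C (interior C) (fun x => f x + g x).
Proof.
move=> hN [fi fc fcond] [gi gne].
have gc := @g_cont g hN (conj gi gne).
split.
- move=> x ix; apply: int_add; first exact: fi.
  exact: interior_subset (gi x ix).
- exact: (within_continuousD fc gc).
move=> A hA [hAi [M hM]] tpos.
have hfA := fcond A hA (conj hAi (ex_intro _ M hM)) tpos.
have hfin : finite_cover_diam C A (1 + `|M|).
  exists [:: A]; split.
    by move=> x Ax; exists A => //; rewrite mem_seq1 eqxx.
  move=> S; rewrite mem_seq1 => /eqP ->; split => // x y Ax Ay.
  have := hM x y Ax Ay; have := ler_norm M; lra.
have Mp : 0 < 1 + `|M| by apply: ltr_pwDl.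
have tle := @tau_le A _ Mp hfin.
move: tpos tle hfA; case E : (tau C A) => [t| |] // t0 _ hfA.
rewrite lte_fin in t0.
have [d1 [d10 [s1 [cov1 hs1]] d1t]] := @tau_lt _ _ hfA.
case: (pselect (exists x0, A x0)) => [[x0 Ax0] | nA]; last first.
  have : (tau C A <= ((t / 2)%R)%:E)%E.
    apply: tau_le; first by apply: divr_gt0.
    exists [::]; split; last by move=> S; rewrite in_nil.
    by move=> x Ax; exfalso; apply: nA; exists x.
  by rewrite E lee_fin => h; exfalso; lra.
have ix0 := hA x0 Ax0.
have [B [B1 hB]] := @cover_bound d1 s1 (f x0) (fi x0 ix0) hs1.
have [b0 hb0] := @Rel_ex (f x0) (g x0) (fi x0 ix0) (gi x0 ix0).
have b01 : 1 <= b0 by case: hb0.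
set E1 := expR M + 1.
have E11 : 1 <= E1 by have := expR_gt0 M; rewrite /E1; lra.
have hK : forall x, A x -> Rel (B * (b0 * E1)) (f x) (g x).
  move=> x Ax.
  have [S hS Sfx] : exists2 S, S \in s1 & S (f x) by apply: cov1; exists x.
  have hfx : Rel B (f x0) (f x) by apply: (hB S hS).
  have hgx : Rel E1 (g x0) (g x).
    apply: (@Rel_dT (g x0) (g x) M) => //; first exact: gi.
    - by apply: (gi); apply: (hA).
    - by apply: le_trans (gne x0 x ix0 (hA x Ax)) (hM x0 x Ax0 Ax).
    - by rewrite /E1; lra.
  exact: (@Rel_trans _ _ _ _ _ (@Rel_sym _ _ _ hfx) (@Rel_trans _ _ _ _ _ hb0 hgx)).
set K := B * (b0 * E1).
have h01 : 1 <= b0 * E1 by rewrite -[1]mulr1; apply: ler_pM; lra.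
have K1 : 1 <= K by rewrite /K -[1]mulr1; apply: ler_pM; lra.
set e1 := expR d1; set et := expR t.
have e1t : e1 < et by rewrite /e1 /et ltr_expR.
have e10 : 1 < e1.
  by rewrite /e1 -expR0 ltr_expR.
set Q := (et * (1 + K) - e1) / K.
have Qet : et < Q by rewrite /Q ltr_pdivlMr; lra.
have Q0 : 0 < Q by have := expR_gt0 t; lra.
have t_lt : t < ln Q by rewrite -ltr_expR lnK ?posrE.
have [d2 [d20 hcov2 d2Q]] : exists d, [/\ 0 < d, finite_cover_diam C A d & d < ln Q].
  by apply: (@tau_lt A); rewrite E lte_fin.
have [s2 [cov2 hs2]] := hcov2.
have td2 : t <= d2.
  have := @tau_le _ _ d20 hcov2 ; by rewrite E lee_fin.
set e2 := expR d2.
have e2Q : e2 < Q by rewrite /e2 -(lnK (x := Q)) ?posrE // ltr_expR.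
have e21 : e1 <= e2 by rewrite /e1 /e2 ler_expR; lra.
set X := (e1 + e2 * K) / (1 + K).
have K10 : 0 < 1 + K by lra.
have X1 : 1 < X by rewrite /X ltr_pdivlMr //; nra.
have Xet : X < et.
  rewrite /X ltr_pdivrMr //.
  have : e2 * K < Q * K by rewrite ltr_pM2r //; lra.
  have : Q * K = et * (1 + K) - e1 by rewrite /Q; field; apply: lt0r_neq0; lra.
  lra.
have X0 : 0 < X by lra.
have D0 : 0 < ln X by apply: ln_gt0.
have Dt : ln X < t by rewrite -ltr_expR lnK ?posrE.
suff h : finite_cover_diam C ((fun x => f x + g x) @` A) (ln X).
  by apply: (le_lt_trans (@tau_le _ _ D0 h)); rewrite lte_fin.
exists [seq (fun x => f x + g x) @` [set x | A x /\ SS (f x) /\ TT x] | SS <- s1, TT <- s2].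
split.
- move=> _ [x Ax <-].
  have [S hS Sfx] : exists2 S, S \in s1 & S (f x) by apply: cov1; exists x.
  have [T hT Tx] := cov2 x Ax.
  exists ((fun x => f x + g x) @` [set x | A x /\ S (f x) /\ T x]).
    by apply/allpairsP; exists (S, T).
  by exists x.
- move=> U /allpairsP [[S T] [/= hS hT ->]]; split.
    move=> _ [x [Ax _] <-]; apply: int_add; first by apply: (fi); apply: (hA).
    by apply: interior_subset; apply: (gi); apply: (hA).
  move=> _ _ [x [Ax [Sfx Tx]] <-] [y [Ay [Sfy Ty]] <-].
  have [_ hS2] := hs1 S hS.
  have [_ hT2] := hs2 T hT.
  have dfx := hS2 _ _ Sfx Sfy.
  have dgx := le_trans (gne x y (hA x Ax) (hA y Ay)) (hT2 _ _ Tx Ty).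
  apply: dT_le => be; rewrite lnK ?posrE // => hbe.
  set del := be - X.
  have hRa : Rel (e1 + del) (f x) (f y).
    apply: (@Rel_dT (f x) (f y) d1); [exact: (fi _ (hA _ Ax)) | exact: (fi _ (hA _ Ay)) | exact: dfx | rewrite /del -/e1; lra].
  have hRb : Rel (e2 + del) (g x) (g y).
    apply: (@Rel_dT (g x) (g y) d2); [exact: (gi _ (hA _ Ax)) | exact: (gi _ (hA _ Ay)) | exact: dgx | rewrite /del -/e2; lra].
  have [_ [_ Ck]] := hK x Ax.
  have Cu : C (f x) by apply: interior_subset; apply: (fi); apply: (hA).
  have Cv : C (g x) by apply: interior_subset; apply: (gi); apply: (hA).
  have := @Rel_sum _ _ _ _ _ _ _ Cu Cv (ltW (lt_le_trans ltr01 K1)) Ck _ hRa hRb.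
  have -> : (e1 + del + (e2 + del) * K) / (1 + K) = be.
    by rewrite /del /X; field; apply: lt0r_neq0.
  by apply; lra.
Qed.

End Cone.

Theorem theorem2p5 (R : realType) (V : completeNormedModType R) (C : set V)
  (f g : V -> V) :
  is_closed_cone C -> normal_cone C -> (exists x, interior C x) ->
  tau_condensing C (interior C) f ->
  dT_nonexpansive C g ->
  tau_condensing C (interior C) (fun x => f x + g x).
Proof. by move=> hC hN hne; apply: main_lemma. Qed.
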